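(* Each of the following five sets of four generalized Bell states in $\mathbb{C}^4\otimes\mathbb{C}^4$ is perfectly distinguishable by one-way LOCC using only projective measurements: $\{\ket{\psi_{00}}\}\cup T$ with $T$ one of $\{\ket{\psi_{01}},\ket{\psi_{10}},\ket{\psi_{33}}\}$, $\{\ket{\psi_{01}},\ket{\psi_{11}},\ket{\psi_{32}}\}$, $\{\ket{\psi_{01}},\ket{\psi_{12}},\ket{\psi_{31}}\}$, $\{\ket{\psi_{01}},\ket{\psi_{13}},\ket{\psi_{30}}\}$, $\{\ket{\psi_{01}},\ket{\psi_{11}},\ket{\psi_{30}}\}$.
   Context: Generalized Bell states in $\mathbb{C}^4\otimes\mathbb{C}^4$ (Alice holds the first factor, Bob the second): $\ket{\psi_{nm}}=\frac12\sum_{j=0}^{3}e^{2\pi i jn/4}\ket{j}_A\ket{j\oplus_4 m}_B$ for $n,m\in\{0,1,2,3\}$, where $j\oplus_4 m=(j+m)\bmod 4$. Perfect distinguishability by one-way LOCC using only projective measurements means: one party performs a projective measurement on her subsystem, communicates the outcome classically, and the other party then performs a projective measurement (depending on that outcome) whose result identifies with certainty which state of the set was shared. *)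

(* Defs.v *)
From mathcomp Require Import all_boot all_order all_algebra all_field.
Set Implicit Arguments. Unset Strict Implicit. Unset Printing Implicit Defensive.
Import Order.TTheory GRing.Theory Num.Theory.
Local Open Scope ring_scope.

(* A vector of C^4 (x) C^4 is represented by its coefficient matrix M:
   psi = sum_{a,b} M a b |a>_A |b>_B. *)

Definition adjmx (A : 'M[algC]_4) : 'M[algC]_4 := \matrix_(i, j) (A j i)^*.

(* Generalized Bell state psi_{nm} = 1/2 sum_j i^(j n) |j>|j+m mod 4>,
   (e^{2 pi i / 4} = 'i). *)
Definition bell (n m : nat) : 'M[algC]_4 :=
  \matrix_(a, b) (if (b : nat) == ((a + m) %% 4)%N then 2^-1 * 'i ^+ (a * n) else 0).

Definition proj_meas (K : nat) (P : 'I_K -> 'M[algC]_4) : Prop :=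
  (forall k, adjmx (P k) = P k /\ P k *m P k = P k) /\ \sum_(k < K) P k = 1%:M.

(* <psi| (X_A (x) Y_B) |psi> *)
Definition expvalAB (M X Y : 'M[algC]_4) : algC :=
  \sum_(a < 4) \sum_(a' < 4) \sum_(b < 4) \sum_(b' < 4)
     (M a b)^* * X a a' * Y b b' * M a' b'.

Definition expvalBA (M X Y : 'M[algC]_4) : algC := expvalAB M Y X.

(* One-way LOCC with projective measurements, first measurement by the party
   whose probability functional is [ev] (ev X Y: X on first-measuring party,
   Y on the second).  The outcome pair (k,l) determines the state: a guess g
   is correct whenever the outcome occurs with nonzero probability. *)
Definition oneway_proj_dist_by (ev : 'M[algC]_4 -> 'M[algC]_4 -> 'M[algC]_4 -> algC)
  (N : nat) (S : 'I_N -> 'M[algC]_4) : Prop :=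
  exists (K L : nat) (P : 'I_K -> 'M[algC]_4) (Q : 'I_K -> 'I_L -> 'M[algC]_4)
         (g : 'I_K -> 'I_L -> 'I_N),
    proj_meas P /\ (forall k, proj_meas (Q k)) /\
    forall (i : 'I_N) k l, ev (S i) (P k) (Q k l) != 0 -> g k l = i.

Definition oneway_LOCC_proj_distinguishable (N : nat) (S : 'I_N -> 'M[algC]_4) : Prop :=
  oneway_proj_dist_by expvalAB S \/ oneway_proj_dist_by expvalBA S.

Definition bell_set (s : seq (nat * nat)) : 'I_(size s) -> 'M[algC]_4 :=
  fun i => bell (nth (0, 0)%N s i).1 (nth (0, 0)%N s i).2.

(* Main.v *)
Require Import Defs.
From mathcomp Require Import all_boot all_order all_algebra all_field.
From mathcomp Require Import ring.
Set Implicit Arguments. Unset Strict Implicit. Unset Printing Implicit Defensive.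
Import Order.TTheory GRing.Theory Num.Theory.
Local Open Scope ring_scope.

Definition sgn (k : nat) : algC := if (k < 2)%N then 1 else -1.
Definition ev (k a : nat) : algC :=
  if odd a == odd k then (if (a < 2)%N then 1 else sgn k) else 0.
Definition Pm (k : 'I_4) : 'M[algC]_4 := \matrix_(a, b) (2^-1 * (ev k a * ev k b)).
Definition xval (M : 'M[algC]_4) (k l : nat) : algC :=
  \sum_(a < 4) \sum_(b < 4) ev k a * M a b * ev l b.

Lemma conj_ev k a : (ev k a)^* = ev k a.
Proof.
rewrite /ev /sgn; case: ifP => _; last by rewrite rmorph0.
case: ifP => _; first by rewrite rmorph1.
by case: ifP => _; rewrite ?rmorph1 ?rmorphN1.
Qed.

Lemma conj_half : (2^-1 : algC)^* = 2^-1.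
Proof. by apply: conj_Creal; rewrite rpredV rpred_nat. Qed.

Lemma expval_fact M k l :
  expvalAB M (Pm k) (Pm l) = (2^-1 * 2^-1) * ((xval M k l)^* * xval M k l).
Proof.
rewrite /expvalAB /xval.
have -> : (\sum_(a < 4) \sum_(b < 4) ev k a * M a b * ev l b)^* =
          \sum_(a < 4) \sum_(b < 4) ev k a * (M a b)^* * ev l b.
  rewrite rmorph_sum; apply: eq_bigr => a _; rewrite rmorph_sum.
  by apply: eq_bigr => b _; rewrite !rmorphM /= !conj_ev.
rewrite big_distrl mulr_sumr; apply: eq_bigr => a _ /=.
rewrite exchange_big /= big_distrl mulr_sumr; apply: eq_bigr => b _ /=.
rewrite big_distrr mulr_sumr; apply: eq_bigr => a' _ /=.
rewrite big_distrr mulr_sumr; apply: eq_bigr => b' _ /=.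
rewrite !mxE; ring.
Qed.

Lemma xval_bell n m k l :
  xval (bell n m) k l = 2^-1 * \sum_(a < 4) ev k a * ev l ((a + m) %% 4) * 'i ^+ (a * n).
Proof.
rewrite /xval mulr_sumr; apply: eq_bigr => a _.
have Hlt : ((a + m) %% 4 < 4)%N by rewrite ltn_pmod.
rewrite (bigD1 (Ordinal Hlt)) //= big1 ?addr0.
  by rewrite mxE /= eqxx; ring.
move=> b Hb; rewrite mxE; case: ifP; last by rewrite mulr0 mul0r.
move=> /eqP Hb'; exfalso; move: Hb => /eqP; apply; exact: val_inj.
Qed.

Definition ipw (k : nat) : algC :=
  if (k %% 4 == 0)%N then 1 else if (k %% 4 == 1)%N then 'i
  else if (k %% 4 == 2)%N then -1 else -'i.

Lemma iX k : 'i ^+ k = ipw k.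
Proof.
have i4 : ('i : algC) ^+ 4 = 1 by rewrite (exprM _ 2 2) sqrCi sqrrN expr1n.
rewrite {1}(divn_eq k 4) exprD mulnC exprM i4 expr1n mul1r /ipw.
have : (k %% 4 < 4)%N by rewrite ltn_pmod.
case: (k %% 4)%N => [|[|[|[|//]]]] _ /=; rewrite ?expr0 ?expr1 ?sqrCi //.
by rewrite exprS sqrCi mulrN1.
Qed.

Ltac fix_ifs :=
  repeat match goal with
  | |- context [if ?b then _ else _] =>
      let v := eval vm_compute in b in change b with v; cbv iota
  end.

Lemma sum_ev2 (k : 'I_4) : \sum_(c < 4) ev k c * ev k c = 2.
Proof.
rewrite !big_ord_recl big_ord0 /ev /sgn.
case: k => [[|[|[|[|//]]]] Hk]; fix_ifs; ring.
Qed.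

Ltac fix_nat :=
  repeat match goal with
  | |- context [?x *+ ?b] =>
      let v := eval vm_compute in b in change b with v
  end; rewrite ?mulr0n ?mulr1n.

Lemma Pm_meas : proj_meas Pm.
Proof.
split.
  move=> k; split.
    apply/matrixP => a b; rewrite !mxE rmorphM /= rmorphM /= !conj_ev conj_half.
    by rewrite [ev k b * _]mulrC.
  apply/matrixP => a b; rewrite !mxE.
  under eq_bigr do rewrite !mxE.
  have -> : \sum_(j < 4) 2^-1 * (ev k a * ev k j) * (2^-1 * (ev k j * ev k b)) =
            (2^-1 * (ev k a * ev k b) * 2^-1) * \sum_(c < 4) ev k c * ev k c.
    by rewrite mulr_sumr; apply: eq_bigr => c _; ring.
  by rewrite sum_ev2; field.
apply/matrixP => a b; rewrite summxE !mxE !big_ord_recl big_ord0 !mxE /ev /sgn.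
case: a => [[|[|[|[|//]]]] Ha]; case: b => [[|[|[|[|//]]]] Hb]; fix_ifs; fix_nat;
  by field.
Qed.

Lemma reduce M (k l : 'I_4) : xval M k l = 0 -> expvalAB M (Pm k) (Pm l) = 0.
Proof. by move=> H; rewrite expval_fact H rmorph0 !mulr0. Qed.

Definition gidx (T : seq (nat * nat)) (k l : 'I_4) : nat :=
  find (fun p : nat * nat =>
     (odd p.2 == odd (k + l)) && (odd p.1 == ((k < 2)%N != (l < 2)%N))) ((0, 0)%N :: T).

Definition gfun (T : seq (nat * nat)) (k l : 'I_4) : 'I_(size ((0, 0)%N :: T)) :=
  Ordinal (ltn_pmod (gidx T k l) (ltn0Sn (size T))).

Lemma main_by T :
    T \in [:: [:: (0, 1); (1, 0); (3, 3)];
              [:: (0, 1); (1, 1); (3, 2)];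
              [:: (0, 1); (1, 2); (3, 1)];
              [:: (0, 1); (1, 3); (3, 0)];
              [:: (0, 1); (1, 1); (3, 0)] ]%N ->
    oneway_proj_dist_by expvalAB (@bell_set ((0, 0)%N :: T)).
Proof.
move=> HT; exists 4%N, 4%N, Pm, (fun _ => Pm), (gfun T).
move: HT; rewrite !inE => /orP[/eqP->|/orP[/eqP->|/orP[/eqP->|/orP[/eqP->|/eqP->]]]].
all: split; [exact Pm_meas | split; [move=> _; exact Pm_meas|]].
all: move=> i k l; case: (eqVneq (gfun _ k l) i) => [//|neq].
all: move=> /eqP H; exfalso; apply: H; apply: reduce.
all: rewrite /bell_set xval_bell.
all: case: i neq => [[|[|[|[|//]]]] Hi] neq;
  case: k neq => [[|[|[|[|//]]]] Hk] neq;
  case: l neq => [[|[|[|[|//]]]] Hl] neq;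
  try (vm_compute in neq; discriminate).
all: rewrite !big_ord_recl big_ord0 !iX /ev /sgn /ipw /=.
all: ring.
Qed.

Theorem theorem7 :
  forall T : seq (nat * nat),
    T \in [:: [:: (0, 1); (1, 0); (3, 3)];
              [:: (0, 1); (1, 1); (3, 2)];
              [:: (0, 1); (1, 2); (3, 1)];
              [:: (0, 1); (1, 3); (3, 0)];
              [:: (0, 1); (1, 1); (3, 0)] ]%N ->
    @oneway_LOCC_proj_distinguishable _ (@bell_set ((0, 0)%N :: T)).
Proof. by move=> T HT; left; apply: main_by. Qed.
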